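(* Let $p(x)=x^n+p_{n-1}x^{n-1}+\cdots+p_0\in\mathcal{O}[x]$ and let $(p,\mathcal{D})$ be a GNS over $\mathcal{O}$ with associated fundamental domain $\mathcal{F}$. Set $p_n=1$, $\Delta=\mathcal{N}\cdot\boldsymbol{\omega}$ and $Z=\{\sum_{j=1}^n\delta_jp_j:\delta_j\in\Delta\}$. Assume (i) $Z+\mathcal{D}\subset\mathcal{D}+p_0\Delta$; (ii) $Z\subset\mathcal{D}\cup(\mathcal{D}-p_0)$; (iii) $\{\sum_{j\in J}p_j: J\subseteq\{1,\ldots,n\}\}\subseteq\mathcal{D}$. Then $(p,\mathcal{D})$ has the finiteness property.
   Context: $\mathbb{K}$ is a number field of degree $k$, $\mathcal{O}$ an order in $\mathbb{K}$ with $\mathbb{Z}$-basis $\omega_1=1,\ldots,\omega_k$, $\boldsymbol{\omega}=(\omega_1,\ldots,\omega_k)$. A GNS over $\mathcal{O}$ is a pair $(p,\mathcal{D})$ with $p\in\mathcal{O}[x]$ monic and $\mathcal{D}\subset\mathcal{O}$ a complete residue system modulo $p(0)$ containing $0$; it has the finiteness property if every $a\in\mathcal{O}[x]$ satisfies $a\equiv\sum_{j=0}^{\ell-1}d_jx^j\pmod p$ for some $\ell\in\mathbb{N}$, $d_j\in\mathcal{D}$. A fundamental domain associated with $(p,\mathcal{D})$ is a bounded set $\mathcal{F}\subset\mathbb{R}^k$ with $\mathbb{R}^k=\mathcal{F}+\mathbb{Z}^k$ disjointly and $\mathcal{D}=\{p(0)\sum_j f_j\omega_j:(f_1,\ldots,f_k)\in\mathcal{F}\}\cap\mathcal{O}$.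 $\mathcal{N}=\{\mathbf{z}\in\mathbb{Z}^k:\overline{\mathcal{F}}\cap(\overline{\mathcal{F}}+\mathbf{z})\neq\emptyset\}$ and $\mathcal{N}\cdot\boldsymbol{\omega}=\{\sum_j z_j\omega_j:\mathbf{z}\in\mathcal{N}\}$. Sums of sets are Minkowski sums, $p_0\Delta=\{p_0\delta:\delta\in\Delta\}$. *)

(* Defs.v *)
From HB Require Import structures.
From mathcomp Require Import all_boot all_order all_algebra.
From Stdlib Require Import Reals.
Set Implicit Arguments. Unset Strict Implicit. Unset Printing Implicit Defensive.
Import GRing.Theory.

Definition IntR (z : int) : R :=
  match z with Posz n => INR n | Negz n => Ropp (INR n.+1) end.

Definition Rvec (k : nat) := 'I_k -> R.

Definition Rsum (k : nat) (g : 'I_k -> R) : R := \big[Rplus/R0]_(j < k) g j.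

(* topological closure in R^k (sup-norm, equivalent to Euclidean) *)
Definition closureR (k : nat) (F : Rvec k -> Prop) (x : Rvec k) : Prop :=
  forall eps : R, Rlt R0 eps ->
    exists f, F f /\ forall i, Rlt (Rabs (Rminus (x i) (f i))) eps.

Definition is_fundamental_domain (k : nat) (F : Rvec k -> Prop) : Prop :=
  [/\ (exists B : R, forall f, F f -> forall i, Rle (Rabs (f i)) B),
      (forall x : Rvec k, exists f (z : 'I_k -> int),
          F f /\ forall i, x i = Rplus (f i) (IntR (z i))) &
      (forall f f' (z z' : 'I_k -> int), F f -> F f' ->
          (forall i, Rplus (f i) (IntR (z i)) = Rplus (f' i) (IntR (z' i))) ->
          forall i, z i = z' i)].

Definition neighbourset (k : nat) (F : Rvec k -> Prop) (z : 'I_k -> int) : Prop :=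
  exists x : Rvec k,
    closureR F x /\ closureR F (fun i => Rminus (x i) (IntR (z i))).

Local Open Scope ring_scope.

Definition dvdO (O : idomainType) (a b : O) : Prop := exists c : O, b = a * c.

Definition complete_residue_system (O : idomainType) (m : O) (D : O -> Prop) : Prop :=
  (forall a : O, exists d, D d /\ dvdO m (a - d)) /\
  (forall d d', D d -> D d' -> dvdO m (d - d') -> d = d').

Definition GNS (O : idomainType) (p : {poly O}) (D : O -> Prop) : Prop :=
  [/\ p \is monic, complete_residue_system p`_0 D & D 0].

Definition finiteness_property (O : idomainType) (p : {poly O}) (D : O -> Prop) : Prop :=
  forall a : {poly O}, exists (l : nat) (d : 'I_l -> O),
    (forall j, D (d j)) /\
    exists q : {poly O}, a - \sum_(j < l) d j *: 'X^j = q * p.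

(* F is a fundamental domain associated with (p, D), where coord gives the
   coordinates w.r.t. the Z-basis omega:  D = {p(0) sum_j f_j omega_j : f in F} ∩ O,
   written out in coordinates. *)
Definition assoc_fundamental_domain (O : idomainType) (k : nat)
    (omega : 'I_k -> O) (coord : O -> 'I_k -> int)
    (p : {poly O}) (D : O -> Prop) (F : Rvec k -> Prop) : Prop :=
  is_fundamental_domain F /\
  forall d : O, D d <->
    exists f, F f /\ forall i,
      IntR (coord d i) = Rsum (fun j => Rmult (f j) (IntR (coord (p`_0 * omega j) i))).

Definition DeltaSet (O : idomainType) (k : nat) (omega : 'I_k -> O)
    (F : Rvec k -> Prop) (x : O) : Prop :=
  exists z : 'I_k -> int, neighbourset F z /\ x = \sum_(j < k) omega j *~ z j.

Definition Zset (O : idomainType) (k : nat) (omega : 'I_k -> O)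
    (F : Rvec k -> Prop) (n : nat) (p : {poly O}) (x : O) : Prop :=
  exists delta : 'I_n -> O, (forall j, DeltaSet omega F (delta j)) /\
    x = \sum_(j < n) delta j * p`_(j.+1).

(* Main.v *)
Require Import Defs.
From HB Require Import structures.
From Stdlib Require Import Reals.
From mathcomp Require Import all_boot all_order all_algebra.
Import GRing.Theory.
Local Open Scope ring_scope.
From Stdlib Require Import Lra Lia Classical ClassicalEpsilon FunctionalExtensionality.
From mathcomp Require Import Rstruct.
From mathcomp Require Import zify.
Import Num.Theory.
Set Implicit Arguments. Unset Strict Implicit. Unset Printing Implicit Defensive.

Definition vadd k (a b : 'I_k -> int) : 'I_k -> int := fun i => a i + b i.
Definition vsub k (a b : 'I_k -> int) : 'I_k -> int := fun i => a i - b i.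
Definition vopp k (a : 'I_k -> int) : 'I_k -> int := fun i => - a i.
Definition vzero k : 'I_k -> int := fun _ => 0.

Lemma IntRE (z : int) : IntR z = z%:~R.
Proof.
case: z => n; first by change (INR n = n%:R); rewrite INRE.
change (Ropp (INR n.+1) = (Negz n)%:~R); by rewrite INRE NegzE mulrNz.
Qed.

Lemma IntR_add a b : IntR (a + b) = Rplus (IntR a) (IntR b).
Proof. by rewrite !IntRE intrD. Qed.
Lemma IntR_sub a b : IntR (a - b) = Rminus (IntR a) (IntR b).
Proof. by rewrite !IntRE intrB. Qed.
Lemma IntR_opp a : IntR (- a) = Ropp (IntR a).
Proof. by rewrite !IntRE mulrNz. Qed.
Lemma IntR0 : IntR 0 = R0.
Proof. by []. Qed.
Lemma IntR_abs z : Rabs (IntR z) = INR (absz z).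
Proof.
case: z => n.
  change (Rabs (INR n) = INR n); apply: Rabs_right; apply: Rle_ge; apply: pos_INR.
change (Rabs (Ropp (INR n.+1)) = INR n.+1).
rewrite Rabs_Ropp; apply: Rabs_right; apply: Rle_ge; apply: pos_INR.
Qed.

Definition dec (m : nat) : int := if odd m then - (m./2)%:Z else (m./2)%:Z.
Definition enc K (z : int) : 'I_(K.*2.+2) := inord (nat_of_bool (z < 0)%R + (absz z).*2)%N.

Lemma dec_enc K z : (absz z <= K)%N -> dec (enc K z) = z.
Proof.
move=> hz; rewrite /enc inordK; last first.
  have : (nat_of_bool (z < 0)%R <= 1)%N by case: (z < 0)%R.
  rewrite -!muln2; lia.
rewrite /dec oddD odd_double half_bit_double addbF.
case: z hz => a hz /=; first by [].
by rewrite NegzE.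
Qed.

Lemma fin_bound (T : finType) (P : T -> nat -> Prop) :
  (forall t m m', P t m -> (m <= m')%N -> P t m') ->
  (forall t, exists m, P t m) -> exists m, forall t, P t m.
Proof.
move=> mono ex.
suff: forall s : seq T, exists m, forall t, t \in s -> P t m.
  by case/(_ (enum T)) => m Hm; exists m => t; apply: Hm; rewrite mem_enum.
elim=> [|a s [m Hm]]; first by exists 0%N.
have [ma Ha] := ex a; exists (maxn m ma) => t; rewrite inE => /orP[/eqP->|ts].
  by apply: mono Ha _; apply: leq_maxr.
by apply: mono (Hm _ ts) _; apply: leq_maxl.
Qed.

Open Scope R_scope.

Definition subv k (y : Rvec k) (g : 'I_k -> int) : Rvec k :=
  fun i => y i - IntR (g i).
Definition nearv k (e : R) (y y' : Rvec k) :=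
  forall i, Rabs (y' i - y i) < e.

Lemma tile_ex k (F : Rvec k -> Prop) : is_fundamental_domain F ->
  forall y : Rvec k, exists g, F (subv y g).
Proof.
case=> _ cov _ y; have [f [z [Ff E]]] := cov y; exists z.
have -> : subv y z = f; last by [].
apply: functional_extensionality => i; rewrite /subv E; lra.
Qed.

Lemma tile_uniq k (F : Rvec k -> Prop) : is_fundamental_domain F ->
  forall y g g', F (subv y g) -> F (subv y g') -> g = g'.
Proof.
case=> _ _ un y g g' H H'; apply: functional_extensionality => i.
apply: (un _ _ g g' H H') => j; rewrite /subv; lra.
Qed.

Lemma clos_ext k (F : Rvec k -> Prop) x y :
  closureR F x -> (forall i, x i = y i) -> closureR F y.
Proof.
move=> H E; have -> : y = x by apply: functional_extensionality => i; rewrite E.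
exact: H.
Qed.

Lemma F_clos k (F : Rvec k -> Prop) f : F f -> closureR F f.
Proof.
move=> Ff eps He; exists f; split=> // i.
by rewrite Rminus_diag Rabs_R0.
Qed.

Lemma nb_sym k (F : Rvec k -> Prop) z :
  neighbourset F z -> neighbourset F (vopp z).
Proof.
case=> x [H1 H2]; exists (fun i => x i - IntR (z i)); split=> //.
apply: (clos_ext H1) => i; rewrite /vopp IntR_opp; lra.
Qed.

Lemma nb_of k (F : Rvec k -> Prop) y g0 h :
  F (subv y g0) -> closureR F (subv y h) -> neighbourset F (vsub h g0).
Proof.
move=> H1 H2; exists (subv y g0); split; first exact: F_clos.
apply: (clos_ext H2) => i; rewrite /subv /vsub IntR_sub; lra.
Qed.

Lemma local k (F : Rvec k -> Prop) (hF : is_fundamental_domain F) (y : Rvec k) g0 :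
  F (subv y g0) -> exists m : nat, forall y', nearv (/ INR m.+1) y y' ->
    forall g', F (subv y' g') -> neighbourset F (vsub g' g0).
Proof.
move=> Hy.
have hF' := hF; case: hF' => [[B HB] _ _].
have [K HK] : exists K : nat, forall i : 'I_k, B + Rabs (y i) + 1 <= INR K.
  apply: (fin_bound (P := fun i m => B + Rabs (y i) + 1 <= INR m)).
  - move=> i m m' H /leP Hm; apply: Rle_trans H _; exact: le_INR.
  - move=> i; have [m Hm] := INR_unbounded (B + Rabs (y i) + 1); exists m; lra.
pose decv (v : {ffun 'I_k -> 'I_(K.*2.+2)}) : 'I_k -> int := fun i => dec (v i).
have [m Hm] : exists m, forall v y', nearv (/ INR m.+1) y y' ->
    F (subv y' (decv v)) -> neighbourset F (vsub (decv v) g0).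
  apply: (fin_bound (P := fun v m => forall y', nearv (/ INR m.+1) y y' ->
    F (subv y' (decv v)) -> neighbourset F (vsub (decv v) g0))).
  - move=> v m m' H /leP Hm y' Hn; apply: H => i; apply: Rlt_le_trans (Hn i) _.
    apply: Rinv_le_contravar; [apply: lt_0_INR; lia | apply: le_INR; lia].
  - move=> v; case: (classic (neighbourset F (vsub (decv v) g0))) => Hnb.
      by exists 0%N.
    apply: NNPP => Hne; apply: Hnb; apply: nb_of Hy _.
    move=> eps He; have [N [HN N0]] := archimed_cor1 eps He.
    have : ~ (forall y', nearv (/ INR N) y y' -> F (subv y' (decv v)) ->
                neighbourset F (vsub (decv v) g0)).
      move=> Hall; apply: Hne; exists N.-1.
      have -> : N.-1.+1 = N by lia.
      exact: Hall.
    move=> /not_all_ex_not [y' Hy'].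
    have [Hn Hy''] := imply_to_and _ _ Hy'; have [Fy' _] := imply_to_and _ _ Hy''.
    exists (subv y' (decv v)); split=> // i; rewrite /subv.
    have E : y i - IntR (decv v i) - (y' i - IntR (decv v i)) = - (y' i - y i) by ring.
    rewrite E Rabs_Ropp; have := Hn i; lra.
exists m => y' Hn g' Fg'.
have Hb : forall i, (absz (g' i) <= K)%N.
  move=> i; apply/leP; apply: INR_le; rewrite -IntR_abs.
  have h1 := HB _ Fg' i; have h2 := Hn i; have h3 := HK i.
  have h4 : / INR m.+1 <= 1.
    rewrite -Rinv_1; apply: Rinv_le_contravar; first lra.
    change 1 with (INR 1); apply: le_INR; lia.
  rewrite /subv in h1.
  move: h1 h2 h3 h4; clear; unfold Rabs; repeat case: Rcase_abs; lra.
set v := [ffun i => enc K (g' i)].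
have Hv : decv v = g'.
  by apply: functional_extensionality => i; rewrite /decv ffunE dec_enc.
by have := Hm v y' Hn; rewrite Hv; apply.
Qed.

Inductive GZ k (F : Rvec k -> Prop) : ('I_k -> int) -> Prop :=
 | GZ0 : GZ F ((@vzero k))
 | GZS z w : GZ F z -> neighbourset F w -> GZ F (vadd z w).

Lemma GZ_nb k (F : Rvec k -> Prop) a b :
  GZ F a -> neighbourset F (vsub b a) -> GZ F b.
Proof.
move=> Ha Hn; have -> : b = vadd a (vsub b a).
  by apply: functional_extensionality => i; rewrite /vadd /vsub addrC subrK.
exact: GZS.
Qed.

Lemma GZ_nb' k (F : Rvec k -> Prop) a b :
  GZ F a -> neighbourset F (vsub a b) -> GZ F b.
Proof.
move=> Ha Hn; apply: (GZ_nb Ha); have := nb_sym Hn.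
have -> : vopp (vsub a b) = vsub b a.
  by apply: functional_extensionality => i; rewrite /vopp /vsub opprB.
by [].
Qed.

Lemma GZ_all k (F : Rvec k -> Prop) (hF : is_fundamental_domain F) :
  forall z, GZ F z.
Proof.
move=> z.
have [g0 Hg0] := tile_ex hF (fun _ => 0).
set x0 := subv (fun _ => 0) g0 in Hg0.
pose s (t : R) : Rvec k := fun i => x0 i + t * IntR (z i).
have [M HM] : exists M : nat, forall i : 'I_k, Rabs (IntR (z i)) <= INR M.
  apply: (fin_bound (P := fun i m => Rabs (IntR (z i)) <= INR m)).
  - move=> i m m' H /leP Hm; apply: Rle_trans H _; exact: le_INR.
  - move=> i; have [m Hm] := INR_unbounded (Rabs (IntR (z i))); exists m; lra.
pose P (t : R) := exists g, F (subv (s t) g) /\ GZ F g.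
pose E (t : R) := 0 <= t <= 1 /\ forall u, 0 <= u <= t -> P u.
have P0 : P 0.
  exists ((@vzero k)); split; last exact: GZ0.
  have -> : subv (s 0) ((@vzero k)) = x0.
    apply: functional_extensionality => i; rewrite /subv /s /vzero IntR0; ring.
  exact: Hg0.
have E0 : E 0.
  split; first lra.
  by move=> u Hu; have -> : u = 0 by lra.
have bE : bound E by exists 1 => t [Ht _]; lra.
have [T [HT1 HT2]] := completeness E bE (ex_intro _ 0 E0).
have T0 : 0 <= T := HT1 _ E0.
have T1 : T <= 1 by apply: HT2 => t [Ht _]; lra.
have [gs Hgs] := tile_ex hF (s T).
have [m Hm] := local hF Hgs.
set eps := / INR m.+1 in Hm.
have eps0 : 0 < eps by apply: Rinv_0_lt_compat; apply: lt_0_INR; lia.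
have M0 : 0 < INR M + 1 by have := pos_INR M; lra.
set del := eps / (INR M + 1).
have del0 : 0 < del.
  by rewrite /del; apply: Rmult_lt_0_compat; [lra | apply: Rinv_0_lt_compat; lra].
have Hd : del * (INR M + 1) = eps by rewrite /del; field; lra.
have Hnear : forall u, Rabs (u - T) < del -> nearv eps (s T) (s u).
  move=> u Hu i; rewrite /s.
  have -> : x0 i + u * IntR (z i) - (x0 i + T * IntR (z i)) = (u - T) * IntR (z i)
    by ring.
  rewrite Rabs_mult; have := HM i; have := Rabs_pos (u - T);
  have := Rabs_pos (IntR (z i)); nra.
have Hloc : forall u, Rabs (u - T) < del ->
    forall g, F (subv (s u) g) -> neighbourset F (vsub g gs).
  by move=> u Hu g Hg; apply: Hm Hg; apply: Hnear.
have [t [Et Ht]] : exists t, E t /\ T - del < t.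
  apply: NNPP => Hn.
  have : T <= T - del; last lra.
  apply: HT2 => t Et; apply: Rnot_lt_le => Hlt; apply: Hn; exists t; split=> //.
have tT : t <= T := HT1 _ Et.
have GZs : GZ F gs.
  case: Et => [Ht01 Hall].
  have [gt [Fgt GZt]] := Hall t (conj (proj1 Ht01) (Rle_refl t)).
  apply: (GZ_nb' GZt); apply: (Hloc t) Fgt.
  apply: Rabs_def1; lra.
have Pnear : forall u, Rabs (u - T) < del -> P u.
  move=> u Hu; have [gu Hgu] := tile_ex hF (s u); exists gu; split=> //.
  by apply: (GZ_nb GZs); apply: (Hloc u Hu).
have T1' : T = 1.
  apply: NNPP => HT.
  set t' := Rmin 1 (T + del / 2).
  have t'1 : t' <= 1 := Rmin_l _ _.
  have t'2 : t' <= T + del / 2 := Rmin_r _ _.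
  have t'3 : T < t' by rewrite /t' /Rmin; case: Rle_dec => ?; lra.
  have Et' : E t'.
    split; first lra.
    move=> u Hu; case: (Rlt_le_dec u T) => HuT.
      have [t2 [[_ Et2] Hut2]] : exists t2, E t2 /\ u < t2.
        apply: NNPP => Hn.
        have : T <= u; last lra.
        apply: HT2 => t2 Et2; apply: Rnot_lt_le => Hlt; apply: Hn; exists t2; split=> //.
      apply: Et2; lra.
    apply: Pnear; apply: Rabs_def1; lra.
  have := HT1 _ Et'; lra.
have [g1 [Fg1 GZg1]] : P 1.
  apply: Pnear; rewrite -T1' Rminus_diag Rabs_R0; lra.
have Hs : subv (s 1) z = x0.
  by apply: functional_extensionality => i; rewrite /subv /s; ring.
have Fz : F (subv (s 1) z) by rewrite Hs.
by have := tile_uniq hF Fg1 Fz => <-.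
Qed.

Open Scope ring_scope.
From mathcomp Require Import ring.

Fixpoint PS (O : idomainType) (s : seq O) : {poly O} :=
  match s with [::] => 0 | a :: s => a%:P + 'X * PS s end.

Definition cong (O : idomainType) (p a b : {poly O}) := exists q, a - b = q * p.
Definition AllD (O : idomainType) (D : O -> Prop) (s : seq O) :=
  forall x, x \in s -> D x.
Definition Rep (O : idomainType) (p : {poly O}) (D : O -> Prop) (a : {poly O}) :=
  exists s, AllD D s /\ cong p a (PS s).

Lemma Rep_cong (O : idomainType) (p : {poly O}) D a b :
  cong p a b -> Rep p D b -> Rep p D a.
Proof.
move=> [q1 h1] [s [Hs [q2 h2]]]; exists s; split=> //; exists (q1 + q2).
by rewrite mulrDl -h1 -h2; ring.
Qed.

Lemma Rep0 (O : idomainType) (p : {poly O}) D : Rep p D 0.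
Proof. by exists [::]; split=> //; exists 0; rewrite mul0r subr0. Qed.

Lemma PS_cat (O : idomainType) (u v : seq O) :
  PS (u ++ v) = PS u + 'X^(size u) * PS v.
Proof.
elim: u => [|a u IH] /=; first by rewrite add0r expr0 mul1r.
by rewrite IH exprS; ring.
Qed.

Lemma PS_nseq0 (O : idomainType) j : PS (nseq j (0 : O)) = 0.
Proof. by elim: j => [|j IH] //=; rewrite IH mulr0 addr0. Qed.

Lemma PS_sum (O : idomainType) (s : seq O) :
  PS s = \sum_(i < size s) s`_i *: 'X^i.
Proof.
elim: s => [|a s IH] /=; first by rewrite big_ord0.
rewrite big_ord_recl /= expr0 alg_polyC IH mulr_sumr; congr (_ + _).
by apply: eq_bigr => i _; rewrite exprS scalerAr.
Qed.

Lemma Rep_shift (O : idomainType) (p : {poly O}) D b u :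
  Rep p D b -> AllD D u -> Rep p D (PS u + 'X^(size u) * b).
Proof.
move=> [s [Hs [q hq]]] Hu; exists (u ++ s); split.
  by move=> x; rewrite mem_cat => /orP[/Hu|/Hs].
exists ('X^(size u) * q); rewrite PS_cat.
have -> : PS u + 'X^(size u) * b - (PS u + 'X^(size u) * PS s) =
  'X^(size u) * (b - PS s) by ring.
by rewrite hq mulrA.
Qed.

Definition Val (O : idomainType) (p : {poly O}) n (A : seq O) (e : nat -> O) :=
  PS A + \sum_(t < n) e t *: drop_poly t.+1 p.

Definition shiftE (O : idomainType) (e : nat -> O) (d : O) : nat -> O :=
  fun t => if t is t'.+1 then e t' else - d.

Lemma drop_dec (O : idomainType) (p : {poly O}) t :
  drop_poly t p = (p`_t)%:P + 'X * drop_poly t.+1 p.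
Proof.
apply/polyP => i; rewrite coefD coefC coefXM !coef_drop_poly.
by case: i => [|i] /=; rewrite ?add0n ?addr0 ?add0r ?addSnnS.
Qed.

Lemma S1 (O : idomainType) (p : {poly O}) n (e : nat -> O) :
  \sum_(t < n) e t *: drop_poly t.+1 p =
  (\sum_(t < n) e t * p`_t.+1)%:P + 'X * \sum_(t < n) e t *: drop_poly t.+2 p.
Proof.
rewrite raddf_sum mulr_sumr -big_split /=; apply: eq_bigr => t _.
by rewrite drop_dec scalerDr polyCM -mul_polyC scalerAr.
Qed.

Lemma S2 (O : idomainType) (p : {poly O}) n (e : nat -> O) d :
  size p = n.+2 ->
  \sum_(t < n.+1) shiftE e d t *: drop_poly t.+1 p =
  - d *: drop_poly 1 p + \sum_(t < n.+1) e t *: drop_poly t.+2 p.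
Proof.
move=> hs; rewrite big_ord_recl [in RHS]big_ord_recr /=.
rewrite (drop_poly_eq0 (m := n.+2)) ?hs // scaler0 addr0; congr (_ + _).
Qed.

Lemma Val_dec (O : idomainType) (p : {poly O}) n A (e : nat -> O) d :
  size p = n.+2 ->
  Val p n.+1 A e = (head 0 A + \sum_(t < n.+1) e t * p`_t.+1)%:P +
     'X * (Val p n.+1 (behead A) (shiftE e d) + d *: drop_poly 1 p).
Proof.
move=> hs; rewrite /Val S2 // S1.
have -> : PS A = (head 0 A)%:P + 'X * PS (behead A) by case: A => [|a A] /=;
  rewrite ?mulr0 ?addr0.
rewrite polyCD scaleNr; ring.
Qed.

Lemma p_dec (O : idomainType) (p : {poly O}) : p = (p`_0)%:P + 'X * drop_poly 1 p.
Proof. by rewrite -drop_dec drop_poly0l. Qed.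

Lemma step (O : idomainType) (p : {poly O}) n (D : O -> Prop) A (e : nat -> O) d dl :
  size p = n.+2 -> D d ->
  head 0 A + \sum_(t < n.+1) e t * p`_t.+1 = d + p`_0 * dl ->
  Rep p D (Val p n.+1 (behead A) (shiftE e dl)) -> Rep p D (Val p n.+1 A e).
Proof.
move=> hs Dd hc hR; rewrite (Val_dec _ _ dl hs) hc.
set V := Val _ _ _ _.
have hR' : Rep p D (PS [:: d] + 'X^(size [:: d]) * V).
  by apply: Rep_shift => // x; rewrite inE => /eqP ->.
apply: (Rep_cong _ hR'); exists dl%:P.
rewrite [p in RHS]p_dec /= polyCD polyCM -mul_polyC expr1 mulr0 addr0; ring.
Qed.

Lemma phase3 (O : idomainType) (p : {poly O}) n (D : O -> Prop)
  (hs : size p = n.+2)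
  (h3 : forall J : {set 'I_n.+1}, D (\sum_(j in J) p`_(j.+1))) :
  forall r (e : nat -> O), (forall t, (t < n.+1)%N -> e t = 0 \/ e t = 1) ->
  (forall t, (t < n.+1 - r)%N -> e t = 0) -> Rep p D (Val p n.+1 [::] e).
Proof.
elim=> [|r IH] e He Hz.
  have -> : Val p n.+1 [::] e = 0.
    rewrite /Val /= add0r big1 // => t _; rewrite Hz ?scale0r //.
  exact: Rep0.
apply: (step (d := \sum_(t < n.+1) e t * p`_t.+1) (dl := 0) hs).
- have -> : \sum_(t < n.+1) e t * p`_t.+1 =
            \sum_(j in [set t : 'I_n.+1 | e t == 1]) p`_j.+1.
    rewrite [RHS]big_mkcond /=; apply: eq_bigr => t _; rewrite inE.
    case: (He t (ltn_ord t)) => ->; rewrite ?eqxx ?mul1r //.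
    by rewrite mul0r eq_sym oner_eq0.
  exact: h3.
- by rewrite /= add0r mulr0 addr0.
- apply: IH.
  + by case=> [|t] Ht; rewrite /shiftE; [left; exact: oppr0 | apply: He; lia].
  + by case=> [|t] Ht; rewrite /shiftE; [exact: oppr0 | apply: Hz; lia].
Qed.

Lemma phase2 (O : idomainType) (p : {poly O}) n (D Dl : O -> Prop)
  (hs : size p = n.+2)
  (h3 : forall J : {set 'I_n.+1}, D (\sum_(j in J) p`_(j.+1)))
  (D0 : D 0) (hp0 : p`_0 != 0)
  (res : forall d d', D d -> D d' -> dvdO p`_0 (d - d') -> d = d')
  (DlN : forall x, Dl x -> Dl (- x))
  (hi : forall (e : 'I_n.+1 -> O) d, (forall j, Dl (e j)) -> D d ->
     exists d' dl, D d' /\ Dl dl /\ \sum_(j < n.+1) e j * p`_j.+1 + d = d' + p`_0 * dl)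
  (hii : forall (e : 'I_n.+1 -> O), (forall j, Dl (e j)) ->
     D (\sum_(j < n.+1) e j * p`_j.+1) \/ D (\sum_(j < n.+1) e j * p`_j.+1 + p`_0)) :
  forall r (e : nat -> O), (forall t, (t < n.+1)%N -> Dl (e t)) ->
  (forall t, (t < n.+1 - r)%N -> e t = 0 \/ e t = 1) -> Rep p D (Val p n.+1 [::] e).
Proof.
elim=> [|r IH] e HD H01.
  apply: (phase3 hs h3 (r := n.+1)).
    by move=> t Ht; apply: H01; rewrite subn0.
  by move=> t; rewrite subnn.
have HDo : forall j : 'I_n.+1, Dl (e j) by move=> j; apply: HD.
have [d' [dl [Dd' [Ddl hc]]]] := hi (fun j => e j) 0 HDo D0.
rewrite addr0 in hc.
set c := \sum_(t < n.+1) e t * p`_t.+1 in hc.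
have hdl : dl = 0 \/ dl = -1.
  case: (hii _ HDo) => Hc.
    left; have E : d' = c.
      by apply: res => //; exists (- dl); rewrite hc; ring.
    have h : p`_0 * dl = c - d' by rewrite hc; ring.
    move: h; rewrite E subrr => /eqP; rewrite mulf_eq0 (negbTE hp0) /=.
    by move/eqP.
  right; have E : d' = c + p`_0.
    by apply: res => //; exists (- dl - 1); rewrite hc; ring.
  have h : p`_0 * (dl + 1) = c - d' + p`_0 by rewrite hc; ring.
  rewrite E in h.
  have h' : p`_0 * (dl + 1) = 0 by rewrite h; ring.
  by move/eqP: h'; rewrite mulf_eq0 (negbTE hp0) /= addr_eq0 => /eqP.
apply: (step (d := d') (dl := dl) hs Dd'); first by rewrite /= add0r.
apply: IH.
  by case=> [|t] Ht; rewrite /shiftE; [exact: DlN | apply: HD; lia].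
case=> [|t] Ht; rewrite /shiftE; last by apply: H01; lia.
by case: hdl => ->; [left; exact: oppr0 | right; exact: opprK].
Qed.

Lemma phase1 (O : idomainType) (p : {poly O}) n (D Dl : O -> Prop)
  (hs : size p = n.+2)
  (h3 : forall J : {set 'I_n.+1}, D (\sum_(j in J) p`_(j.+1)))
  (D0 : D 0) (hp0 : p`_0 != 0)
  (res : forall d d', D d -> D d' -> dvdO p`_0 (d - d') -> d = d')
  (DlN : forall x, Dl x -> Dl (- x))
  (hi : forall (e : 'I_n.+1 -> O) d, (forall j, Dl (e j)) -> D d ->
     exists d' dl, D d' /\ Dl dl /\ \sum_(j < n.+1) e j * p`_j.+1 + d = d' + p`_0 * dl)
  (hii : forall (e : 'I_n.+1 -> O), (forall j, Dl (e j)) ->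
     D (\sum_(j < n.+1) e j * p`_j.+1) \/ D (\sum_(j < n.+1) e j * p`_j.+1 + p`_0)) :
  forall A, AllD D A -> forall (e : nat -> O), (forall t, (t < n.+1)%N -> Dl (e t)) ->
  Rep p D (Val p n.+1 A e).
Proof.
elim=> [|a A IH] HA e HD.
  by apply: (phase2 hs h3 D0 hp0 res DlN hi hii (r := n.+1)) => // t; rewrite subnn.
have HDo : forall j : 'I_n.+1, Dl (e j) by move=> j; apply: HD.
have [d' [dl [Dd' [Ddl hc]]]] := hi (fun j => e j) a HDo (HA a (mem_head _ _)).
apply: (step (d := d') (dl := dl) hs Dd'); first by rewrite /= addrC.
apply: IH.
  by move=> x hx; apply: HA; rewrite inE hx orbT.
by case=> [|t] Ht; rewrite /shiftE; [exact: DlN | apply: HD; lia].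
Qed.

Lemma drop_top (O : idomainType) (p : {poly O}) n :
  p \is monic -> size p = n.+1 -> drop_poly n p = 1.
Proof.
move=> hm hs; apply/polyP => i; rewrite coef_drop_poly coef1.
case: i => [|i] /=.
  by rewrite add0n; move/monicP: hm; rewrite lead_coefE hs.
by rewrite nth_default // hs; lia.
Qed.

Lemma Rep_addC (O : idomainType) (p : {poly O}) n (D Dl : O -> Prop)
  (hs : size p = n.+2) (hm : p \is monic)
  (h3 : forall J : {set 'I_n.+1}, D (\sum_(j in J) p`_(j.+1)))
  (D0 : D 0) (hp0 : p`_0 != 0)
  (res : forall d d', D d -> D d' -> dvdO p`_0 (d - d') -> d = d')
  (Dl0 : Dl 0)
  (DlN : forall x, Dl x -> Dl (- x))
  (hi : forall (e : 'I_n.+1 -> O) d, (forall j, Dl (e j)) -> D d ->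
     exists d' dl, D d' /\ Dl dl /\ \sum_(j < n.+1) e j * p`_j.+1 + d = d' + p`_0 * dl)
  (hii : forall (e : 'I_n.+1 -> O), (forall j, Dl (e j)) ->
     D (\sum_(j < n.+1) e j * p`_j.+1) \/ D (\sum_(j < n.+1) e j * p`_j.+1 + p`_0))
  b dl : Rep p D b -> Dl dl -> Rep p D (b + dl%:P).
Proof.
move=> [s [Hs [q hq]]] Hdl.
pose e (t : nat) : O := if t == n then dl else 0.
have HV : Rep p D (Val p n.+1 s e).
  apply: (phase1 hs h3 D0 hp0 res DlN hi hii Hs) => t _.
  by rewrite /e; case: (t == n).
apply: (Rep_cong _ HV); exists q.
have -> : Val p n.+1 s e = PS s + dl%:P.
  rewrite /Val big_ord_recr /= big1 ?add0r.
    by rewrite /e eqxx drop_top // alg_polyC.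
  by move=> t _; rewrite /e (ltn_eqF (ltn_ord t)) scale0r.
by rewrite -hq; ring.
Qed.

Lemma Rep_addX (O : idomainType) (p : {poly O}) (D Dl : O -> Prop)
  (hadd : forall b dl, Rep p D b -> Dl dl -> Rep p D (b + dl%:P))
  (D0 : D 0) b dl j : Rep p D b -> Dl dl -> Rep p D (b + dl *: 'X^j).
Proof.
move=> [s [Hs [q hq]]] Hdl.
set s1 := s ++ nseq j 0.
have Hs1 : AllD D s1.
  move=> x; rewrite mem_cat => /orP[/Hs//|]; rewrite mem_nseq => /andP[_ /eqP->].
  exact: D0.
have E1 : PS s1 = PS s by rewrite PS_cat PS_nseq0 mulr0 addr0.
set u := take j s1; set v := drop j s1.
have Hu : size u = j by rewrite size_takel // size_cat size_nseq leq_addl.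
have Hv : AllD D v by move=> x /mem_drop/Hs1.
have HuD : AllD D u by move=> x /mem_take/Hs1.
have Rv : Rep p D (PS v + dl%:P).
  apply: hadd Hdl; exists v; split=> //; exists 0; by rewrite subrr mul0r.
have := Rep_shift Rv HuD; rewrite Hu => H; apply: (Rep_cong _ H); exists q.
have E2 : PS s = PS u + 'X^j * PS v.
  by rewrite -{1}Hu -PS_cat /u /v cat_take_drop E1.
by rewrite -hq E2 -mul_polyC; ring.
Qed.

Inductive HS (O : idomainType) (Dl : O -> Prop) : O -> Prop :=
 | HS0 : HS Dl 0
 | HSS c d : HS Dl c -> Dl d -> HS Dl (c + d).

Lemma Rep_all (O : idomainType) (p : {poly O}) (D Dl : O -> Prop)
  (haddX : forall b dl j, Rep p D b -> Dl dl -> Rep p D (b + dl *: 'X^j))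
  (hH : forall c, HS Dl c) : forall a, Rep p D a.
Proof.
have hc : forall c, HS Dl c -> forall b j, Rep p D b -> Rep p D (b + c *: 'X^j).
  move=> c; elim=> [|c' d' _ IH Hd] b j Hb; first by rewrite scale0r addr0.
  by rewrite scalerDl addrA; apply: haddX => //; apply: IH.
move=> a; rewrite -[a in Rep p D a]coefK poly_def.
elim: (size a) => [|m IH]; first by rewrite big_ord0; exact: Rep0.
by rewrite big_ord_recr /=; apply: hc.
Qed.

Lemma Rsum0 k (g : 'I_k -> R) : (forall j, g j = R0) -> Rsum g = R0.
Proof.
move=> H; rewrite /Rsum; apply: (big_ind (fun x : R => x = R0)) => //.
by move=> x y -> ->; rewrite Rplus_0_r.
Qed.

Lemma sum_omega0 (O : idomainType) k (omega : 'I_k -> O) :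
  \sum_(i < k) omega i *~ (0 : int) = 0.
Proof. by rewrite big1 // => i _; rewrite mulr0z. Qed.

Lemma GZ_HS (O : idomainType) k (omega : 'I_k -> O) (F : Rvec k -> Prop) z :
  GZ F z -> HS (DeltaSet omega F) (\sum_(i < k) omega i *~ z i).
Proof.
elim=> [|z' w _ IH Hw].
  by rewrite /vzero sum_omega0; exact: HS0.
rewrite /vadd; under eq_bigr do rewrite mulrzDr; rewrite big_split /=.
by apply: HSS => //; exists w.
Qed.

Lemma Rep_fin (O : idomainType) (p : {poly O}) (D : O -> Prop) :
  (forall a, Rep p D a) -> finiteness_property p D.
Proof.
move=> H a; have [s [Hs [q hq]]] := H a.
exists (size s), (fun j => s`_j); split.
  by move=> j; apply: Hs; apply: mem_nth.
by exists q; rewrite -PS_sum.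
Qed.

Theorem mainTheorem8
  (O : idomainType) (k : nat) (hk : (0 < k)%N)
  (omega : 'I_k -> O) (coord : O -> 'I_k -> int)
  (homega1 : omega (Ordinal hk) = 1)
  (hcoord : forall a : O, a = \sum_(i < k) omega i *~ coord a i)
  (hcoord_uniq : forall (c : 'I_k -> int) (i : 'I_k),
      coord (\sum_(j < k) omega j *~ c j) i = c i)
  (n : nat) (p : {poly O}) (hsize : size p = n.+1)
  (D : O -> Prop) (F : Rvec k -> Prop)
  (hGNS : GNS p D)
  (hF : assoc_fundamental_domain omega coord p D F)
  (h1 : forall z d, Zset omega F n p z -> D d ->
          exists d' delta, D d' /\ DeltaSet omega F delta /\ z + d = d' + p`_0 * delta)
  (h2 : forall z, Zset omega F n p z -> D z \/ D (z + p`_0))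
  (h3 : forall J : {set 'I_n}, D (\sum_(j in J) p`_(j.+1))) :
  finiteness_property p D.
Proof.
case: hGNS => hm [hcov res] D0.
case: hF => hFD hDF.
have hp0 : p`_0 != 0.
  apply/negP => /eqP h0.
  have [d [Dd [c hc]]] := hcov 1.
  rewrite h0 mul0r in hc.
  have d1 : d = 1 by apply/eqP; rewrite eq_sym -subr_eq0 hc.
  rewrite d1 in Dd.
  have [f [Ff Hf]] := (hDF 1).1 Dd.
  have hc1 : forall i, coord 1 i = 0.
    move=> i; have := Hf i; rewrite Rsum0; last first.
      move=> j; rewrite h0 mul0r.
      have -> : coord 0 i = 0.
        by have := hcoord_uniq (fun _ => 0) i; rewrite sum_omega0.
      by rewrite IntR0 Rmult_0_r.
    by rewrite IntRE => /eqP; rewrite intr_eq0 => /eqP.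
  have := hcoord 1; rewrite (eq_bigr (fun i => omega i *~ 0)); last first.
    by move=> i _; rewrite hc1.
  by rewrite sum_omega0 => /eqP; rewrite oner_eq0.
case: n hsize h1 h2 h3 => [|n] hsize h1 h2 h3.
  have hp1 : p = 1.
    rewrite (size1_polyC (eq_leq hsize)).
    by move/monicP: hm; rewrite lead_coefE hsize /= => ->.
  move=> a; exists 0%N, (fun _ => 0); split; first by case.
  by exists a; rewrite big_ord0 subr0 hp1 mulr1.
set Dl := DeltaSet omega F.
have Dl0 : Dl 0.
  exists (@vzero k); split; last by rewrite /vzero sum_omega0.
  have [g Hg] := tile_ex hFD (fun _ => R0).
  exists (subv (fun _ => R0) g); split; first exact: F_clos.
  apply: (clos_ext (F_clos Hg)) => i; rewrite /vzero IntR0.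
  by rewrite /Rminus Ropp_0 Rplus_0_r.
have DlN : forall x, Dl x -> Dl (- x).
  move=> x [z [Hz ->]]; exists (vopp z); split; first exact: nb_sym.
  by rewrite -sumrN; apply: eq_bigr => i _; rewrite /vopp mulrNz.
have hi : forall (e : 'I_n.+1 -> O) d, (forall j, Dl (e j)) -> D d ->
     exists d' dl, D d' /\ Dl dl /\ \sum_(j < n.+1) e j * p`_j.+1 + d = d' + p`_0 * dl.
  by move=> e d He Dd; apply: h1 => //; exists e.
have hii : forall (e : 'I_n.+1 -> O), (forall j, Dl (e j)) ->
     D (\sum_(j < n.+1) e j * p`_j.+1) \/ D (\sum_(j < n.+1) e j * p`_j.+1 + p`_0).
  by move=> e He; apply: h2; exists e.
have res' : forall d d', D d -> D d' -> dvdO p`_0 (d - d') -> d = d'.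
  by move=> d d' Dd Dd' Hdv; apply: res.
have hadd := Rep_addC hsize hm h3 D0 hp0 res' Dl0 DlN hi hii.
have haddX : forall b dl j, Rep p D b -> Dl dl -> Rep p D (b + dl *: 'X^j).
  by move=> b dl j; apply: Rep_addX.
apply: Rep_fin; apply: (Rep_all haddX) => c.
rewrite (hcoord c); apply: GZ_HS; exact: GZ_all.
Qed.
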